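(* Let $p$ be an odd prime. The family $\{1+p^n\mathbb{N}_0:n\in\mathbb{N}\}$ coincides with the set of ${\uparrow}$-chain elements of the poset $\mathcal{X}_p$ (and this set is linearly ordered).
   Context: $\mathbb{N}=\{1,2,\dots\}$, $\mathbb{N}_0=\{0\}\cup\mathbb{N}$, $x^{\mathbb{N}}=\{x^k:k\in\mathbb{N}\}$. $\mathcal{X}_p=\{\overline{a^{\mathbb{N}}}:a\in\mathbb{N}\setminus p\mathbb{N},\ a\ne1\}$, closures taken in the $p$-adic topology on $\mathbb{N}\setminus p\mathbb{N}$ (generated by the sets $x+p^m\mathbb{N}_0$, $x,m\in\mathbb{N}$), partially ordered by reverse inclusion: $X\le Y$ iff $Y\subseteq X$. An element $t$ of a poset $(P,\le)$ is a ${\uparrow}$-chain element if its upper set ${\uparrow}t=\{x\in P:x\ge t\}$ is a chain (any two elements are comparable). *)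

(* Defs.v *)
From mathcomp Require Import all_boot.
From Stdlib Require Import List.
Set Implicit Arguments. Unset Strict Implicit. Unset Printing Implicit Defensive.

Definition subset_nat := nat -> Prop.

Definition NnotpN (p : nat) : subset_nat := fun x => 0 < x /\ ~~ (p %| x).

Definition coset (p x m : nat) : subset_nat := fun z => exists k, z = x + p ^ m * k.

(* p-adic topology on N \ pN, generated (as a subbasis) by the sets
   (x + p^m N_0) ∩ (N \ pN), x, m ∈ N: U is open iff U ⊆ N\pN and every
   point of U lies in a finite intersection of generating sets contained in U
   (the empty intersection being the whole space N \ pN). *)
Definition padic_open (p : nat) (U : subset_nat) : Prop :=
  (forall x, U x -> NnotpN p x) /\
  forall x, U x -> exists l : list (nat * nat),
    (forall ym, In ym l -> 0 < ym.1 /\ 0 < ym.2) /\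
    (forall ym, In ym l -> coset p ym.1 ym.2 x) /\
    (forall z, NnotpN p z -> (forall ym, In ym l -> coset p ym.1 ym.2 z) -> U z).

Definition padic_closure (p : nat) (S : subset_nat) : subset_nat :=
  fun x => NnotpN p x /\
    forall U, padic_open p U -> U x -> exists s, U s /\ S s.

Definition powers (a : nat) : subset_nat := fun z => exists k, 0 < k /\ z = a ^ k.

Definition Xp (p : nat) (X : subset_nat) : Prop :=
  exists a, NnotpN p a /\ a <> 1 /\ X = padic_closure p (powers a).

Definition Xle (X Y : subset_nat) : Prop := forall z, Y z -> X z.

Definition up_chain_element {T : Type} (P : T -> Prop) (le : T -> T -> Prop) (t : T) : Prop :=
  P t /\ forall x y, P x -> P y -> le t x -> le t y -> le x y \/ le y x.

(* Main.v *)
Require Import Defs.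
From mathcomp Require Import all_boot.
From mathcomp Require Import cyclic zify all_algebra ring.
From Stdlib Require Import List FunctionalExtensionality PropExtensionality.
Set Implicit Arguments. Unset Strict Implicit.


Lemma modE1 q y : 0 < y -> (y == 1 %[mod q]) = (q %| y.-1).
Proof. by move=> y0; rewrite eqn_mod_dvd // subn1. Qed.

Lemma fermat p a : prime p -> ~~ (p %| a) -> p %| (a ^ p.-1).-1.
Proof.
move=> hp hpa; have a0 : 0 < a by case: a hpa => //; rewrite dvdn0.
rewrite -modE1 ?expn_gt0 ?a0 //; apply/eqP.
rewrite -(totient_prime hp); apply: Euler_exp_totient.
by rewrite coprime_sym prime_coprime.
Qed.

Lemma geom_mod p x m : 0 < x -> p %| x.-1 ->
  (\sum_(i < m) x ^ i) = m %[mod p].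
Proof.
move=> x0 hx; have hx' : x = 1 %[mod p] by apply/eqP; rewrite modE1.
rewrite -modn_summ (eq_bigr (fun _ => 1 %% p)); last first.
  by move=> i _; rewrite -modnXm hx' modnXm exp1n.
by rewrite modn_summ sum1_card card_ord.
Qed.

Lemma desc p x m j : prime p -> 0 < x -> p %| x.-1 -> ~~ (p %| m) ->
  p ^ j %| (x ^ m).-1 -> p ^ j %| x.-1.
Proof.
move=> hp x0 hx hm; rewrite predn_exp Gauss_dvdl //.
apply: coprimeXl; rewrite prime_coprime //.
by rewrite /dvdn (geom_mod m x0 hx).
Qed.

Lemma up p x j : prime p -> 0 < x -> 0 < j -> p ^ j %| x.-1 -> p ^ j.+1 %| (x ^ p).-1.
Proof.
move=> hp x0 j0 hx; have hx1 : p %| x.-1.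
  by apply: dvdn_trans hx; rewrite -{1}(expn1 p) dvdn_exp2l.
rewrite predn_exp expnSr dvdn_mul //.
by rewrite /dvdn (geom_mod p x0 hx1) modnn.
Qed.

Lemma fo q w j : (1 + q * w) ^ j = 1 + j * q * w %[mod q ^ 2].
Proof.
elim: j => [|j IH]; first by rewrite expn0 !mul0n addn0.
rewrite expnS -modnMmr IH modnMmr.
have -> : (1 + q * w) * (1 + j * q * w) = 1 + j.+1 * q * w + (j * w * w) * q ^ 2.
  rewrite expnS expn1; nia.
by rewrite addnC modnMDl.
Qed.


Lemma exact_step p j w : prime p -> odd p -> 0 < j -> ~~ (p %| w) ->
  exists w', (1 + p ^ j * w) ^ p = 1 + p ^ j.+1 * w' /\ ~~ (p %| w').
Proof.
move=> hp hodd j0 hw.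
have p1 : 1 < p by apply: prime_gt1.
have p2 : 2 < p by rewrite ltn_neqAle p1 andbT; apply/eqP => e; rewrite -e in hodd.
set q := p ^ j; set x := 1 + q * w.
set S := \sum_(i < p) x ^ i.
have hpq : p %| q by rewrite /q -{1}(expn1 p) dvdn_exp2l.
have hS : S %% p ^ 2 = p.
  have e1 : S = \sum_(i < p) (1 + i * q * w) %[mod q ^ 2].
    rewrite /S -[LHS]modn_summ -[RHS]modn_summ; congr (_ %% _); apply: eq_bigr => i _.
    by rewrite fo.
  have e2 : \sum_(i < p) (1 + i * q * w) = p + 'C(p, 2) * (q * w).
    rewrite big_split /= sum1_card card_ord; congr (_ + _).
    rewrite -bin2_sum big_mkord big_distrl /=; apply: eq_bigr => i _; by rewrite mulnA.
  have hd : p ^ 2 %| q ^ 2 by apply: dvdn_exp2r.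
  rewrite -(modn_dvdm S hd) e1 e2 (modn_dvdm _ hd).
  have /dvdnP [c1 ->] : p %| 'C(p, 2) by apply: prime_dvd_bin => //; apply/andP.
  move/dvdnP: hpq => [q1 ->].
  have -> : c1 * p * (q1 * p * w) = (c1 * q1 * w) * p ^ 2 by rewrite expnS expn1; ring.
  by rewrite addnC modnMDl modn_small // expnS expn1 -{1}(muln1 p) ltn_pmul2l // ltnW.
set t := S %/ p ^ 2.
have eS : S = p * (t * p + 1).
  by rewrite {1}(divn_eq S (p ^ 2)) hS expnS expn1; ring.
exists (w * (t * p + 1)); split.
  rewrite -[LHS]prednK ?expn_gt0 ?addn_gt0 // predn_exp -/S.
  have -> : x.-1 = q * w by rewrite /x add1n.
  rewrite eS expnSr -/q -add1n; ring.
rewrite Euclid_dvdM // negb_or hw /= /dvdn modnMDl modn_small //.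
Qed.


Lemma valit p n u : prime p -> odd p -> 0 < n -> ~~ (p %| u) -> forall i,
  exists w, (1 + p ^ n * u) ^ (p ^ i) = 1 + p ^ (n + i) * w /\ ~~ (p %| w).
Proof.
move=> hp hodd n0 hu; elim=> [|i [w [e hw]]].
  by exists u; rewrite expn0 expn1 addn0.
have [w' [e' hw']] := exact_step hp hodd (ltn_addr i n0) hw.
by exists w'; rewrite expnSr expnM e e' addnS.
Qed.

Lemma not_dvd_1add p n u : prime p -> 0 < n -> ~~ (p %| 1 + p ^ n * u).
Proof.
move=> hp n0; rewrite dvdn_addl ?dvdn1 ?neq_ltn ?prime_gt1 ?orbT //.
by rewrite dvdn_mulr // -{1}(expn1 p) dvdn_exp2l.
Qed.

Lemma genp p n u : prime p -> odd p -> 0 < n -> ~~ (p %| u) -> forall i x,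
  x = 1 %[mod p ^ n] -> exists k, (1 + p ^ n * u) ^ k = x %[mod p ^ (n + i)].
Proof.
move=> hp hodd n0 hu; elim=> [|i IH] x hx.
  by exists 0; rewrite addn0 expn0 hx.
have [k hk] := IH x hx.
set a := 1 + p ^ n * u.
set M := n + i.
have [w [he hw]] := valit hp hodd n0 hu i.
rewrite -/a -/M in he hk.
set r := a ^ k.
have M0 : 0 < M by rewrite /M ltn_addr.
have p1 : 1 < p by apply: prime_gt1.
have pa : ~~ (p %| a) by apply: not_dvd_1add.
set c := r * w.
have pc : coprime c p.
  by rewrite coprime_sym prime_coprime // Euclid_dvdM // Euclid_dvdX // negb_or (negbTE pa) hw.
set x' := x + p ^ M.+1 * r.
have hx'x : x' = x %[mod p ^ M.+1] by rewrite /x' addnC mulnC modnMDl.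
have hx'r : r <= x'.
  by apply: leq_trans (leq_addl x _); apply: leq_pmull; rewrite expn_gt0 ltnW.
have hdiv : p ^ M %| x' - r.
  rewrite -eqn_mod_dvd //.
  have -> : x' = (p * r) * p ^ M + x by rewrite /x' expnS; ring.
  by rewrite modnMDl hk.
set D := (x' - r) %/ p ^ M.
have eD : x' = r + D * p ^ M by rewrite /D divnK // subnKC.
set j := D * c ^ p.-2.
have hjc : j * c = D %[mod p].
  have -> : j * c = D * c ^ (totient p).
    have hp1 : 0 < p.-1 by rewrite -subn1 subn_gt0.
    by rewrite totient_prime // /j -mulnA -expnSr prednK.
  have eE := Euler_exp_totient pc.
  by rewrite -modnMmr eE modnMmr muln1.
exists (k + p ^ i * j).
rewrite addnS -/M expnD expnM he -/r.
have e2 : (1 + p ^ M * w) ^ j = 1 + j * p ^ M * w %[mod p ^ M.+1].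
  have hd : p ^ M.+1 %| (p ^ M) ^ 2 by rewrite -expnM dvdn_exp2l // muln2 -addnn -{1}(addn0 M) ltn_add2l.
  by rewrite -(modn_dvdm _ hd) fo (modn_dvdm _ hd).
rewrite -modnMmr e2 modnMmr.
have -> : r * (1 + j * p ^ M * w) = r + (j * c) * p ^ M by rewrite /c; ring.
rewrite -modnDmr expnS -muln_modl hjc muln_modl modnDmr -expnS -eD.
by rewrite hx'x.
Qed.


Definition incl p a x := NnotpN p x /\ forall M, exists k, 0 < k /\ a ^ k = x %[mod p ^ M].

Lemma boost a m k x t : coprime a m -> a ^ k = x %[mod m] -> a ^ (k + t * totient m) = x %[mod m].
Proof.
move=> ham hk; have eE := Euler_exp_totient ham.
rewrite expnD (mulnC t) expnM -modnMmr -modnXm eE.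
by rewrite modnXm exp1n modnMmr muln1.
Qed.

Lemma foldr_le (l : list (nat * nat)) ym : In ym l -> ym.2 <= foldr (fun ym acc => ym.2 + acc) 0 l.
Proof.
elim: l => [//|y l IH] /= [->|h]; first exact: leq_addr.
exact: leq_trans (IH h) (leq_addl _ _).
Qed.

Lemma mod_weak m M x y : m <= M -> forall p, x = y %[mod p ^ M] -> x = y %[mod p ^ m].
Proof.
move=> hm p h; have hd : p ^ m %| p ^ M by apply: dvdn_exp2l.
by rewrite -(modn_dvdm x hd) h (modn_dvdm _ hd).
Qed.

Lemma CL p a : prime p -> NnotpN p a -> 1 < a -> forall x,
  padic_closure p (powers a) x <-> incl p a x.
Proof.
move=> hp [a0 hpa] a1 x; split.
  move=> [hx H]; split=> // M.
  pose U := fun z => NnotpN p z /\ coset p x M.+1 z.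
  have Uo : padic_open p U.
    split; first by move=> z [].
    move=> z [hz [k ek]]; exists [:: (z, M.+1)]; split; last split.
    - by move=> ym [<-|[]] /=; split=> //; case: hz.
    - by move=> ym [<-|[]] /=; exists 0; rewrite muln0 addn0.
    - move=> z' hz' hall; split=> //.
      have [k' ->] := hall _ (or_introl erefl).
      by exists (k + k'); rewrite /= ek mulnDr addnA.
  have Ux : U x by split=> //; exists 0; rewrite muln0 addn0.
  have [s [[_ [k' es]] [k [k0 ekk]]]] := H U Uo Ux.
  rewrite ekk in es.
  exists k; split=> //; rewrite es.
  have -> : x + p ^ M.+1 * k' = (p * k') * p ^ M + x by rewrite expnS; ring.
  by rewrite modnMDl.
move=> [hx H]; split=> // U [Usub Uop] Ux.
have [l [hl1 [hl2 hl3]]] := Uop x Ux.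
set M := foldr (fun ym acc => ym.2 + acc) 0 l.
have [k [k0 hk]] := H M.
have cop : coprime a (p ^ M) by rewrite coprime_sym coprimeXl // prime_coprime.
set k' := k + x * totient (p ^ M).
have hk' := boost x cop hk.
have P0 : 0 < totient (p ^ M) by rewrite totient_gt0 expn_gt0 prime_gt0.
have xle : x <= a ^ k'.
  apply: ltnW; apply: (leq_trans (ltn_expl x a1)); apply: leq_pexp2l => //.
  by rewrite /k'; apply: leq_trans (leq_addl _ _); apply: leq_pmulr.
exists (a ^ k'); split; last by exists k'; split=> //; rewrite /k' ltn_addr.
apply: hl3.
  by split; [rewrite expn_gt0 a0 | rewrite Euclid_dvdX // negb_and hpa].
move=> ym hym; have [c hc] := hl2 ym hym.
have hym1 : ym.1 <= a ^ k' by apply: leq_trans xle; rewrite hc leq_addr.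
have h1 : a ^ k' = x %[mod p ^ ym.2] := mod_weak (foldr_le hym) hk'.
have h2 : x = ym.1 %[mod p ^ ym.2] by rewrite hc addnC mulnC modnMDl.
have hd : p ^ ym.2 %| a ^ k' - ym.1 by rewrite -eqn_mod_dvd // h1 h2.
by exists ((a ^ k' - ym.1) %/ p ^ ym.2); rewrite mulnC divnK // subnKC.
Qed.


Lemma coset_mod p n z : prime p -> 0 < n -> coset p 1 n z <-> z = 1 %[mod p ^ n].
Proof.
move=> hp n0; split.
  by move=> [k ->]; rewrite addnC mulnC modnMDl.
move=> hz.
have pn1 : 1 < p ^ n by rewrite -{1}(expn0 p) ltn_exp2l ?prime_gt1.
have z0 : 0 < z.
  by case: z hz => // h; rewrite mod0n modn_small // in h.
have hd : p ^ n %| z - 1 by rewrite -eqn_mod_dvd // hz.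
by exists ((z - 1) %/ p ^ n); rewrite mulnC divnK // subnKC.
Qed.

Lemma self_in p a : prime p -> NnotpN p a -> 1 < a -> padic_closure p (powers a) a.
Proof.
move=> hp ha a1; apply/(CL hp ha a1); split=> // M; exists 1; by rewrite expn1.
Qed.

Lemma fermat2 p y : prime p -> ~~ (p %| y) -> y ^ p = y %[mod p].
Proof.
move=> hp hy; have y0 : 0 < y by case: y hy => //; rewrite dvdn0.
have hf := fermat hp hy.
rewrite -modE1 ?expn_gt0 ?y0 // in hf.
by rewrite -{1}(prednK (prime_gt0 hp)) expnS -modnMmr (eqP hf) modnMmr muln1.
Qed.

Lemma clos_coset p n u : prime p -> odd p -> 0 < n -> ~~ (p %| u) ->
  padic_closure p (powers (1 + p ^ n * u)) = coset p 1 n.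
Proof.
move=> hp hodd n0 hu.
have u0 : 0 < u by case: u hu => //; rewrite dvdn0.
have pn0 : 0 < p ^ n by rewrite expn_gt0 prime_gt0.
have a1 : 1 < 1 + p ^ n * u by rewrite -{1}(addn0 1) ltn_add2l muln_gt0 pn0.
have ha : NnotpN p (1 + p ^ n * u) by split=> //; apply: not_dvd_1add.
have am : 1 + p ^ n * u = 1 %[mod p ^ n] by rewrite addnC mulnC modnMDl.
apply: functional_extensionality => z; apply: propositional_extensionality.
rewrite (CL hp ha a1) (coset_mod _ hp n0); split.
  move=> [_ H]; have [k [_ hk]] := H n.
  by rewrite -hk -modnXm am modnXm exp1n.
move=> hz; split.
  have [k ek] := (proj2 (coset_mod z hp n0)) hz.
  by rewrite ek; split; [rewrite addn_gt0 | apply: not_dvd_1add].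
move=> M; have [k hk] := genp hp hodd n0 hu M hz.
have hk' := mod_weak (leq_addl n M) hk.
have cop : coprime (1 + p ^ n * u) (p ^ M).
  by rewrite coprime_sym coprimeXl // prime_coprime //; apply: not_dvd_1add.
exists (k + 1 * totient (p ^ M)); split.
  by rewrite mul1n addn_gt0 totient_gt0 expn_gt0 (prime_gt0 hp) orbT.
exact: boost.
Qed.

Lemma classify p a : prime p -> odd p -> NnotpN p a -> 1 < a -> p %| a.-1 ->
  exists n, 0 < n /\ padic_closure p (powers a) = coset p 1 n.
Proof.
move=> hp hodd ha a1 hpa.
have a0 : 0 < a.-1 by rewrite -subn1 subn_gt0.
have [m cm em] := pfactor_coprime hp a0.
set n := logn p a.-1 in em.
have n0 : 0 < n by rewrite /n -pfactor_dvdn // expn1.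
exists n; split=> //.
have -> : a = 1 + p ^ n * m by rewrite -[LHS](prednK (ltnW a1)) em add1n mulnC.
by apply: clos_coset => //; rewrite -prime_coprime.
Qed.

Lemma incl_pow p a e z : 0 < e -> incl p (a ^ e) z -> incl p a z.
Proof.
move=> e0 [hz H]; split=> // M; have [k [k0 hk]] := H M.
by exists (e * k); split; [rewrite muln_gt0 e0 | rewrite expnM].
Qed.

Lemma cos_sub p n m : n <= m -> Xle (coset p 1 n) (coset p 1 m).
Proof.
move=> nm z [k ->]; exists (p ^ (m - n) * k).
by rewrite mulnA -expnD subnKC.
Qed.


Theorem lemma4p5 (p : nat) (hp : prime p) (hodd : odd p) :
  (forall t : subset_nat,
     up_chain_element (Xp p) Xle t <-> exists n, 0 < n /\ t = coset p 1 n) /\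
  (forall n m, 0 < n -> 0 < m ->
     Xle (coset p 1 n) (coset p 1 m) \/ Xle (coset p 1 m) (coset p 1 n)).
Proof.
have p1 := prime_gt1 hp.
have pp : 0 < p.-1 by rewrite -subn1 subn_gt0.
have gt1 : forall a, NnotpN p a -> a <> 1 -> 1 < a.
  move=> a [a0 _] an1; rewrite ltn_neqAle a0 andbT; apply/eqP => e; exact: an1 (esym e).
split; last first.
  move=> n m _ _; case: (leqP n m) => h; [left | right]; apply: cos_sub => //; exact: ltnW.
move=> t; split.
- move=> [[a [ha [an1 ->]]] hch].
  have a1 := gt1 a ha an1.
  case: (boolP (p %| a.-1)) => hpa; first exact: classify.
  exfalso.
  have [a0 hpa0] := ha.
  set b := a ^ p.-1.
  have hNap : NnotpN p (a ^ p).
    by split; [rewrite expn_gt0 a0 | rewrite Euclid_dvdX // negb_and hpa0].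
  have hNb : NnotpN p b.
    by split; [rewrite expn_gt0 a0 | rewrite Euclid_dvdX // negb_and hpa0].
  have ap1 : 1 < a ^ p.
    by apply: leq_trans a1 _; rewrite -{1}(expn1 a) leq_pexp2l // prime_gt0.
  have b1 : 1 < b by apply: leq_trans a1 _; rewrite -{1}(expn1 a) leq_pexp2l.
  have XY1 : Xp p (padic_closure p (powers (a ^ p))).
    by exists (a ^ p); split=> //; split=> // e; rewrite e in ap1.
  have XY2 : Xp p (padic_closure p (powers b)).
    by exists b; split=> //; split=> // e; rewrite e in b1.
  have L1 : Xle (padic_closure p (powers a)) (padic_closure p (powers (a ^ p))).
    move=> z; rewrite (CL hp hNap ap1) (CL hp ha a1); exact: incl_pow (prime_gt0 hp).
  have L2 : Xle (padic_closure p (powers a)) (padic_closure p (powers b)).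
    move=> z; rewrite (CL hp hNb b1) (CL hp ha a1); exact: incl_pow pp.
  have hbp : p %| b.-1 := fermat hp hpa0.
  have hb : b = 1 %[mod p] by apply/eqP; rewrite modE1 // expn_gt0 a0.
  case: (hch _ _ XY1 XY2 L1 L2) => H.
  + have := H b (self_in hp hNb b1); rewrite (CL hp hNap ap1) => -[_ Hm].
    have b0' : 0 < b.-1 by rewrite -subn1 subn_gt0.
    set n := logn p b.-1.
    have n0 : 0 < n by rewrite /n -pfactor_dvdn // expn1.
    have hn : p ^ n %| b.-1 by rewrite pfactor_dvdn.
    have hn1 : ~~ (p ^ n.+1 %| b.-1) by rewrite pfactor_dvdn // ltnn.
    have [k [k0 hk]] := Hm n.+1.
    set y := a ^ k.
    have ey : (a ^ p) ^ k = y ^ p by rewrite -!expnM mulnC.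
    rewrite ey in hk.
    have y0 : 0 < y by rewrite expn_gt0 a0.
    have hpy : ~~ (p %| y) by rewrite Euclid_dvdX // negb_and hpa0.
    have hyp1 : p %| y.-1.
      have h1 : y ^ p = b %[mod p ^ 1] := mod_weak (ltn0Sn n) hk.
      rewrite expn1 in h1.
      by rewrite -modE1 //; apply/eqP; rewrite -(fermat2 hp hpy) h1 hb.
    have hyb : y ^ p.-1 = b ^ k by rewrite -!expnM mulnC.
    have h3 : p ^ n %| (y ^ p.-1).-1 by rewrite hyb predn_exp dvdn_mulr.
    have hnd : ~~ (p %| p.-1) by rewrite gtnNdvd // ltn_predL prime_gt0.
    have h4 := desc hp y0 hyp1 hnd h3.
    have h5 := up hp y0 n0 h4.
    have h7 : b = 1 %[mod p ^ n.+1].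
      by rewrite -hk; apply/eqP; rewrite modE1; [exact: h5 | rewrite expn_gt0 y0].
    by move/eqP: h7; rewrite modE1; [move=> h6; rewrite h6 in hn1 | rewrite expn_gt0 a0].
  + have := H (a ^ p) (self_in hp hNap ap1); rewrite (CL hp hNb b1) => -[_ Hm].
    have [k [_ hk]] := Hm 1; rewrite expn1 in hk.
    have : a = 1 %[mod p] by rewrite -(fermat2 hp hpa0) -hk -modnXm hb modnXm exp1n.
    by move/eqP; rewrite modE1 // => h; rewrite h in hpa.
- move=> [n [n0 ->]].
  have hmem : forall X, Xp p X -> Xle (coset p 1 n) X -> exists m, 0 < m /\ X = coset p 1 m.
    move=> X [a [ha [an1 ->]]] hX.
    have a1 := gt1 a ha an1.
    apply: classify => //.
    have := hX a (self_in hp ha a1); rewrite coset_mod // => h.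
    have h' : a = 1 %[mod p ^ 1] := mod_weak n0 h.
    rewrite expn1 in h'.
    by rewrite -modE1 ?(ltnW a1) //; apply/eqP.
  split.
    have pn0 : 0 < p ^ n by rewrite expn_gt0 prime_gt0.
    exists (1 + p ^ n); split; last split.
    + split; first by rewrite addn_gt0.
      by rewrite -[p ^ n]muln1; apply: not_dvd_1add.
    + by move=> e; move: pn0; rewrite -(addKn 1 (p ^ n)) e subnn.
    + have h1 : ~~ (p %| 1) by rewrite dvdn1 neq_ltn p1 orbT.
      by rewrite -[p ^ n]muln1 (clos_coset hp hodd n0 h1).
  move=> X Y hX hY hXt hYt.
  have [m1 [_ ->]] := hmem X hX hXt.
  have [m2 [_ ->]] := hmem Y hY hYt.
  case: (leqP m1 m2) => h; [left | right]; apply: cos_sub => //; exact: ltnW.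
Qed.
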